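(* Let $\kappa$ be a regular infinite cardinal and $\mu$ a singular cardinal with $\mathrm{cf}(\mu)=\kappa$. Then $\mathrm{add}(\mathcal M_\kappa({}^{\kappa}\mu,\kappa))=\mathrm{add}(\mathcal M_\kappa({}^{\mu}\mu,\mathrm{bd}))=\mathrm{add}(\mathcal M_\kappa({}^{\mu}\mu,\kappa))=\mathrm{add}(\mathcal M_\kappa({}^{\mu}2,\mu))=\mathrm{add}(\mathcal M_\kappa({}^{\mu}\mu,\mu))$ $=\mathrm{cov}(\mathcal M_\kappa({}^{\kappa}\mu,\kappa))=\mathrm{cov}(\mathcal M_\kappa({}^{\mu}\mu,\mathrm{bd}))=\mathrm{cov}(\mathcal M_\kappa({}^{\mu}\mu,\kappa))=\mathrm{cov}(\mathcal M_\kappa({}^{\mu}2,\mu))=\mathrm{cov}(\mathcal M_\kappa({}^{\mu}\mu,\mu))=\kappa^+$.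
   Context: For ordinals $\delta,\rho$, ${}^{\delta}\rho$ is the set of functions $\delta\to\rho$; for a partial function $s\colon\delta\rightharpoonup\rho$, $[s]=\{f\in{}^{\delta}\rho: s\subseteq f\}$. Topologies on ${}^{\delta}\rho$: ${<}\kappa$-box (base $[s]$, $|\mathrm{dom}(s)|<\kappa$), denoted $\kappa$; ${<}\mu$-box (base $[s]$, $|\mathrm{dom}(s)|<\mu$), denoted $\mu$; bounded (base $[s]$, $s\in{}^{\alpha}\rho$, $\alpha<\delta$), denoted $\mathrm{bd}$. A set is $\kappa$-meagre if it is a union of at most $\kappa$ nowhere dense sets; $\mathcal M_\kappa(X,\tau)$ is the ideal of $\kappa$-meagre subsets of $(X,\tau)$. For a proper ideal $\mathcal I$ on $X$: $\mathrm{add}(\mathcal I)$ is the least size of $A\subseteq\mathcal I$ with $\bigcup A\notin\mathcal I$; $\mathrm{cov}(\mathcal I)$ is the least size of $C\subseteq\mathcal I$ with $\bigcup C=X$. *)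

(* Defs.v *)
(* combinatorial set theory modelled with types.
   Ordinals are represented by well-ordered types, cardinalities are compared
   via injections, subsets are predicates. *)

Definition inj {A B : Type} (f : A -> B) : Prop := forall x y, f x = f y -> x = y.
Definition bij {A B : Type} (f : A -> B) : Prop := inj f /\ forall y, exists x, f x = y.

Definition le_card (A B : Type) : Prop := exists f : A -> B, inj f.
Definition lt_card (A B : Type) : Prop := le_card A B /\ ~ le_card B A.

Record woType := WOType {
  wo_car :> Type;
  wo_lt : wo_car -> wo_car -> Prop;
  wo_irrefl : forall x, ~ wo_lt x x;
  wo_trans : forall x y z, wo_lt x y -> wo_lt y z -> wo_lt x z;
  wo_total : forall x y, wo_lt x y \/ x = y \/ wo_lt y x;
  wo_wf : well_founded wo_lt }.
Arguments wo_lt {w}.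

(* W is an initial ordinal, i.e. a cardinal: every proper initial segment is smaller. *)
Definition is_cardinal (W : woType) : Prop :=
  forall a : W, lt_card {x : W | wo_lt x a} W.

Definition infinite (A : Type) : Prop := le_card nat A.

Definition regular (W : woType) : Prop :=
  is_cardinal W /\
  forall S : W -> Prop, lt_card {x : W | S x} W -> exists b : W, forall x, S x -> wo_lt x b.

Definition cofinal {W : woType} (C : W -> Prop) : Prop :=
  forall x : W, exists y, C y /\ (x = y \/ wo_lt x y).

Definition cf_is (M : woType) (K : Type) : Prop :=
  (exists C : M -> Prop, cofinal C /\ exists f : {x : M | C x} -> K, bij f) /\
  (forall C : M -> Prop, cofinal C -> le_card K {x : M | C x}).

Definition is_succ_card (K L : Type) : Prop :=
  lt_card K L /\ forall Y : Type, lt_card K Y -> le_card L Y.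

Definition interior {X : Type} (Bs : (X -> Prop) -> Prop) (S : X -> Prop) (x : X) : Prop :=
  exists B, Bs B /\ B x /\ forall y, B y -> S y.
Definition closure {X : Type} (Bs : (X -> Prop) -> Prop) (S : X -> Prop) (x : X) : Prop :=
  forall B, Bs B -> B x -> exists y, B y /\ S y.
Definition nowhere_dense {X : Type} (Bs : (X -> Prop) -> Prop) (N : X -> Prop) : Prop :=
  forall x, ~ interior Bs (closure Bs N) x.

(* [s] for a partial function s with domain D: {f | s ⊆ f} *)
Definition cyl {D R : Type} (dom : D -> Prop) (s : D -> R) (f : D -> R) : Prop :=
  forall i, dom i -> f i = s i.

Definition box_base (C D R : Type) (B : (D -> R) -> Prop) : Prop :=
  exists (dom : D -> Prop) (s : D -> R),
    lt_card {i : D | dom i} C /\ forall f, B f <-> cyl dom s f.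

Definition bd_base (D : woType) (R : Type) (B : (D -> R) -> Prop) : Prop :=
  exists (alpha : D) (s : D -> R),
    forall f, B f <-> cyl (fun i => wo_lt i alpha) s f.

Definition meagre_k (K : Type) {X : Type} (Bs : (X -> Prop) -> Prop) (S : X -> Prop) : Prop :=
  exists F : K -> X -> Prop, (forall k, nowhere_dense Bs (F k)) /\
    forall x, S x <-> exists k, F k x.

Definition add_is {X : Type} (I : (X -> Prop) -> Prop) (L : Type) : Prop :=
  (forall (A : Type) (F : A -> X -> Prop), lt_card A L -> (forall a, I (F a)) ->
      I (fun x => exists a, F a x)) /\
  (exists F : L -> X -> Prop, (forall a, I (F a)) /\ ~ I (fun x => exists a, F a x)).

Definition cov_is {X : Type} (I : (X -> Prop) -> Prop) (L : Type) : Prop :=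
  (forall (A : Type) (F : A -> X -> Prop), lt_card A L -> (forall a, I (F a)) ->
      ~ (forall x, exists a, F a x)) /\
  (exists F : L -> X -> Prop, (forall a, I (F a)) /\ forall x, exists a, F a x).

(* Main.v *)
Require Import Defs.
From Stdlib Require Import Classical ClassicalEpsilon FunctionalExtensionality Lia PeanoNat Wellfounded List.

Lemma le_refl (A : Type) : le_card A A.
Proof. exists (fun x => x). intros x y H; exact H. Qed.

Lemma le_trans (A B C : Type) : le_card A B -> le_card B C -> le_card A C.
Proof. intros [f Hf] [g Hg]. exists (fun x => g (f x)). intros x y H. apply Hf, Hg, H. Qed.

Lemma lt_le_trans (A B C : Type) : lt_card A B -> le_card B C -> lt_card A C.
Proof. intros [H1 H2] H3. split. eapply le_trans; eauto. intro H4. apply H2. eapply le_trans; eauto. Qed.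

Lemma le_lt_trans (A B C : Type) : le_card A B -> lt_card B C -> lt_card A C.
Proof. intros H1 [H2 H3]. split. eapply le_trans; eauto. intro H4. apply H3. eapply le_trans; eauto. Qed.

Lemma sig_eq {T : Type} {P : T -> Prop} (a b : {x | P x}) : proj1_sig a = proj1_sig b -> a = b.
Proof. destruct a as [a pa], b as [b pb]; simpl; intro H; subst. f_equal. apply proof_irrelevance. Qed.

Lemma sub_le {T : Type} (P Q : T -> Prop) : (forall x, P x -> Q x) -> le_card {x | P x} {x | Q x}.
Proof. intro H. exists (fun x => exist Q (proj1_sig x) (H _ (proj2_sig x))).
  intros x y E. apply sig_eq. apply (f_equal (@proj1_sig _ _)) in E. exact E. Qed.

Lemma sub_le_T {T : Type} (P : T -> Prop) : le_card {x | P x} T.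
Proof. exists (@proj1_sig _ _). intros x y E. apply sig_eq, E. Qed.

Lemma prod_le (A A' B B' : Type) : le_card A A' -> le_card B B' -> le_card (A * B) (A' * B').
Proof. intros [f Hf] [g Hg]. exists (fun p => (f (fst p), g (snd p))).
  intros [a b] [c d] E. simpl in E. injection E; intros. f_equal; auto. Qed.

Lemma bij_le {A B : Type} (f : A -> B) : bij f -> le_card A B /\ le_card B A.
Proof. intros [Hi Hs]. split. exists f; exact Hi.
  exists (fun b => proj1_sig (constructive_indefinite_description _ (Hs b))).
  intros x y E. destruct (constructive_indefinite_description _ (Hs x)) as [a Ha].
  destruct (constructive_indefinite_description _ (Hs y)) as [b Hb]. simpl in E. subst. reflexivity. Qed.

Lemma surj_le {A B : Type} (g : B -> A) : (forall a, exists b, g b = a) -> le_card A B.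
Proof. intro H. exists (fun a => proj1_sig (constructive_indefinite_description _ (H a))).
  intros x y E. destruct (constructive_indefinite_description _ (H x)) as [a Ha].
  destruct (constructive_indefinite_description _ (H y)) as [b Hb]. simpl in E. subst. reflexivity. Qed.

Definition Fin (n : nat) := {i : nat | i < n}.

Lemma pigeon : forall n (f : nat -> nat), (forall i, f i < n) -> (forall i j, f i = f j -> i = j) -> False.
Proof.
  induction n as [|n IH]; intros f Hb Hi.
  - specialize (Hb 0). lia.
  - destruct (classic (exists i0, f i0 = n)) as [[i0 Hi0]|Hno].
    + apply (IH (fun i => f (if i <? i0 then i else S i))).
      * intro i. destruct (Nat.ltb_spec i i0).
        { assert (f i <> n). { intro Hc. rewrite <- Hi0 in Hc. apply Hi in Hc. lia. }
          specialize (Hb i). lia. }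
        { assert (f (S i) <> n). { intro Hc. rewrite <- Hi0 in Hc. apply Hi in Hc. lia. }
          specialize (Hb (S i)). lia. }
      * intros i j E. destruct (Nat.ltb_spec i i0), (Nat.ltb_spec j i0); apply Hi in E; lia.
    + apply (IH f); auto. intro i. specialize (Hb i). assert (f i <> n) by (intro; apply Hno; eauto). lia.
Qed.

Lemma fin_not_inf n : ~ infinite (Fin n).
Proof. intros [e He]. apply (pigeon n (fun i => proj1_sig (e i))).
  intro i; exact (proj2_sig (e i)). intros i j E. apply He, sig_eq, E. Qed.

Lemma fin_prod (A B : Type) n m : le_card A (Fin n) -> le_card B (Fin m) -> le_card (A * B) (Fin (n * m)).
Proof.
  intros [f Hf] [g Hg].
  assert (Hlt : forall p : A * B, proj1_sig (f (fst p)) * m + proj1_sig (g (snd p)) < n * m).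
  { intros [a b]; simpl. destruct (f a) as [i Hi], (g b) as [j Hj]; simpl.
    assert (S i * m <= n * m) by (apply Nat.mul_le_mono_r; lia). simpl in *. lia. }
  exists (fun p => exist (fun i => i < n * m) _ (Hlt p)).
  intros [a b] [c d] E. apply (f_equal (@proj1_sig _ _)) in E. simpl in E.
  destruct (f a) as [i Hi] eqn:Ea, (g b) as [j Hj] eqn:Eb, (f c) as [i' Hi'] eqn:Ec, (g d) as [j' Hj'] eqn:Ed; simpl in E.
  assert (i = i').
  { destruct (Nat.lt_trichotomy i i') as [H|[H|H]]; auto; exfalso.
    - assert (S i * m <= i' * m) by (apply Nat.mul_le_mono_r; lia). simpl in *. lia.
    - assert (S i' * m <= i * m) by (apply Nat.mul_le_mono_r; lia). simpl in *. lia. }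
  subst i'. assert (j = j') by lia. subst j'.
  assert (a = c). { apply Hf. rewrite Ea, Ec. apply sig_eq. reflexivity. }
  assert (b = d). { apply Hg. rewrite Eb, Ed. apply sig_eq. reflexivity. }
  subst; reflexivity.
Qed.

Lemma fin_dich (A : Type) : infinite A \/ exists n, le_card A (Fin n).
Proof.
  destruct (classic (inhabited A)) as [iA|nA].
  2: { right. exists 0. exists (fun a => False_rect _ (nA (inhabits a))). intros x. exfalso; apply nA; exact (inhabits x). }
  destruct (classic (exists n, le_card A (Fin n))) as [H|Hn]; [right; exact H|left].
  set (l := fix l (n : nat) : list A := match n with 0 => nil | S n => epsilon iA (fun a => ~ In a (l n)) :: l n end).
  assert (Hex : forall n, exists a, ~ In a (l n)).
  { intro n. apply NNPP. intro H. apply Hn. exists (length (l n)).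
    assert (Hall : forall a, exists i, i < length (l n) /\ nth_error (l n) i = Some a).
    { intro a. apply NNPP; intro H2. apply H. exists a. intro Hin. apply H2.
      destruct (In_nth_error _ _ Hin) as [i Hi]. exists i. split; auto.
      apply nth_error_Some. rewrite Hi; discriminate. }
    exists (fun a => exist (fun i => i < length (l n)) _ (proj1 (proj2_sig (constructive_indefinite_description _ (Hall a))))).
    intros x y E. apply (f_equal (@proj1_sig _ _)) in E. simpl in E.
    destruct (constructive_indefinite_description _ (Hall x)) as [i [Hi0 Hi]].
    destruct (constructive_indefinite_description _ (Hall y)) as [j [Hj0 Hj]]. simpl in E. subst.
    rewrite Hi in Hj. injection Hj; auto. }
  assert (Hsub : forall k n, k <= n -> forall a, In a (l k) -> In a (l n)).
  { intros k n Hkn. induction Hkn; auto. intros a Ha. simpl. right. auto. }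
  exists (fun n => epsilon iA (fun a => ~ In a (l n))).
  assert (Hnot : forall n, ~ In (epsilon iA (fun a => ~ In a (l n))) (l n)).
  { intro n. apply (epsilon_spec iA (fun a => ~ In a (l n))), Hex. }
  assert (Hin : forall n, In (epsilon iA (fun a => ~ In a (l n))) (l (S n))).
  { intro n. simpl. left. reflexivity. }
  intros x y E. destruct (Nat.lt_trichotomy x y) as [H|[H|H]]; auto; exfalso.
  - apply (Hnot y). rewrite <- E. apply (Hsub (S x)); auto.
  - apply (Hnot x). rewrite E. apply (Hsub (S y)); auto.
Qed.

Lemma fin_to_nat n : le_card (Fin n) nat.
Proof. apply sub_le_T. Qed.

Lemma fin_lt_inf (A W : Type) n : infinite W -> le_card A (Fin n) -> lt_card A W.
Proof. intros HW HA. split. eapply le_trans; [exact HA|]. eapply le_trans; [apply fin_to_nat|exact HW].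
  intro H. apply (fin_not_inf n). eapply le_trans; [exact HW|]. eapply le_trans; eauto. Qed.

Lemma skip (A : Type) (f : nat -> A) (a : A) : (forall i j, f i = f j -> i = j) ->
  exists g : nat -> A, (forall i j, g i = g j -> i = j) /\ forall n, g n <> a.
Proof.
  intro Hf. destruct (classic (exists n0, f n0 = a)) as [[n0 Hn0]|Hno].
  - exists (fun n => f (if n <? n0 then n else S n)). split.
    + intros i j E. apply Hf in E. destruct (Nat.ltb_spec i n0), (Nat.ltb_spec j n0); lia.
    + intros n E. rewrite <- Hn0 in E. apply Hf in E. destruct (Nat.ltb_spec n n0); lia.
  - exists f. split; auto. intros n E. apply Hno. eauto.
Qed.

Lemma opt_le_inf (Sx : Type) : infinite Sx -> le_card (option Sx) Sx.
Proof.
  intros [e He].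
  set (g := fun o : option Sx => match o with None => e 0 | Some s =>
    match excluded_middle_informative (exists n, e n = s) with
    | left h => e (S (proj1_sig (constructive_indefinite_description _ h)))
    | right _ => s end end).
  exists g. intros [x|] [y|]; unfold g; simpl.
  - destruct (excluded_middle_informative (exists n, e n = x)) as [h1|h1];
    destruct (excluded_middle_informative (exists n, e n = y)) as [h2|h2].
    + destruct (constructive_indefinite_description _ h1) as [n1 E1].
      destruct (constructive_indefinite_description _ h2) as [n2 E2]; simpl.
      intro E. apply He in E. injection E; intro; subst; reflexivity.
    + destruct (constructive_indefinite_description _ h1) as [n1 E1]; simpl. intro E. exfalso; apply h2; eauto.
    + destruct (constructive_indefinite_description _ h2) as [n2 E2]; simpl. intro E. exfalso; apply h1; eauto.
    + intro E; subst; reflexivity.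
  - destruct (excluded_middle_informative (exists n, e n = x)) as [h1|h1].
    + destruct (constructive_indefinite_description _ h1) as [n1 E1]; simpl. intro E. apply He in E. discriminate.
    + intro E. exfalso; apply h1; eauto.
  - destruct (excluded_middle_informative (exists n, e n = y)) as [h1|h1].
    + destruct (constructive_indefinite_description _ h1) as [n1 E1]; simpl. intro E. apply He in E. discriminate.
    + intro E. exfalso; apply h1; eauto.
  - reflexivity.
Qed.

Definition wrec {T : Type} {R : T -> T -> Prop} (wf : well_founded R) {A : Type}
  (G : forall x, (forall y, R y x -> A) -> A) : T -> A := Fix wf (fun _ => A) G.

Lemma wrec_eq {T : Type} {R : T -> T -> Prop} (wf : well_founded R) {A : Type}
  (G : forall x, (forall y, R y x -> A) -> A) x : wrec wf G x = G x (fun y _ => wrec wf G y).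
Proof. unfold wrec. rewrite Fix_eq. reflexivity. intros x0 f g H.
  assert (f = g) by (apply functional_extensionality_dep; intro y; apply functional_extensionality_dep; intro; apply H).
  subst; reflexivity. Qed.

Lemma compar (W : woType) (A : Type) : le_card W A \/ le_card A W.
Proof.
  destruct (classic (inhabited A)) as [iA|nA].
  2: { right. exists (fun a => False_rect W (nA (inhabits a))). intros x. exfalso; apply nA; exact (inhabits x). }
  set (g := wrec (wo_wf W) (fun x (f : forall y, wo_lt y x -> A) => epsilon iA (fun a => forall y (h : wo_lt y x), f y h <> a))).
  assert (Hg : forall x, g x = epsilon iA (fun a => forall y, wo_lt y x -> g y <> a)).
  { intro x. unfold g at 1. rewrite wrec_eq. reflexivity. }
  destruct (classic (forall x, exists a, forall y, wo_lt y x -> g y <> a)) as [H|H].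
  - left. exists g. intros x y E.
    destruct (wo_total W x y) as [Hl|[He|Hl]]; auto; exfalso.
    + pose proof (epsilon_spec iA _ (H y)) as S. rewrite <- Hg in S. apply (S x Hl). auto.
    + pose proof (epsilon_spec iA _ (H x)) as S. rewrite <- Hg in S. apply (S y Hl). auto.
  - right. apply not_all_ex_not in H. destruct H as [x Hx].
    apply (surj_le g). intro a. apply NNPP. intro Hn. apply Hx. exists a. intros y _ E. apply Hn; eauto.
Qed.

Definition sub_wo (W : woType) (P : W -> Prop) : woType.
Proof.
  refine (@WOType {x : W | P x} (fun a b => wo_lt (proj1_sig a) (proj1_sig b)) _ _ _ _).
  - intros [x px]; apply wo_irrefl.
  - intros [x ?] [y ?] [z ?]; simpl; apply wo_trans.
  - intros [x px] [y py]; simpl. destruct (wo_total W x y) as [H|[H|H]]; auto.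
    right; left. apply sig_eq. exact H.
  - apply (wf_inverse_image _ _ wo_lt (@proj1_sig _ _)). apply wo_wf.
Defined.

Definition seg {W : woType} (a : W) := {x : W | wo_lt x a}.
Definition segw (W : woType) (a : W) : woType := sub_wo W (fun x => wo_lt x a).

Definition wle {W : woType} (x y : W) := wo_lt x y \/ x = y.

Lemma wle_lt_trans (W : woType) (x y z : W) : wle x y -> wo_lt y z -> wo_lt x z.
Proof. intros [H|H] H2; [eapply wo_trans; eauto|subst; auto]. Qed.

Lemma wle_trans (W : woType) (x y z : W) : wle x y -> wle y z -> wle x z.
Proof. intros [H|H] [H2|H2]; subst; unfold wle; auto. left; eapply wo_trans; eauto. Qed.

Definition mx {W : woType} (p : W * W) : W :=
  if excluded_middle_informative (wo_lt (fst p) (snd p)) then snd p else fst p.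

Lemma mx_in (W : woType) (p : W * W) : mx p = fst p \/ mx p = snd p.
Proof. unfold mx. destruct (excluded_middle_informative _); auto. Qed.

Lemma mx_ge (W : woType) (p : W * W) : wle (fst p) (mx p) /\ wle (snd p) (mx p).
Proof. unfold mx, wle. destruct (excluded_middle_informative _) as [H|H]; auto.
  split; auto. destruct (wo_total W (fst p) (snd p)) as [H2|[H2|H2]]; auto. contradiction. Qed.

Definition lex2 {A B : Type} (RA : A -> A -> Prop) (RB : B -> B -> Prop) (p q : A * B) :=
  RA (fst p) (fst q) \/ (fst p = fst q /\ RB (snd p) (snd q)).

Lemma wf_lex2 {A B : Type} (RA : A -> A -> Prop) (RB : B -> B -> Prop) :
  well_founded RA -> well_founded RB -> well_founded (lex2 RA RB).
Proof.
  intros HA HB [a b]. revert b. induction (HA a) as [a _ IHa]. intro b. induction (HB b) as [b _ IHb].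
  constructor. intros [a' b'] [H|[E H]]; simpl in *.
  - apply IHa; auto.
  - subst a'. apply IHb; auto.
Qed.

Definition prec {W : woType} (p q : W * W) : Prop :=
  lex2 wo_lt (lex2 wo_lt wo_lt) (mx p, (fst p, snd p)) (mx q, (fst q, snd q)).

Lemma wf_prec (W : woType) : well_founded (@prec W).
Proof. unfold prec. apply (wf_inverse_image _ _ (lex2 wo_lt (lex2 wo_lt wo_lt)) (fun p => (mx p, (fst p, snd p)))).
  apply wf_lex2; [apply wo_wf|apply wf_lex2; apply wo_wf]. Qed.

Lemma prec_total (W : woType) (p q : W * W) : p <> q -> prec p q \/ prec q p.
Proof.
  intro Hne. unfold prec, lex2; simpl.
  destruct (wo_total W (mx p) (mx q)) as [H|[H|H]]; [tauto| |tauto].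
  assert (H' := eq_sym H).
  destruct (wo_total W (fst p) (fst q)) as [H2|[H2|H2]]; [tauto| |tauto].
  assert (H2' := eq_sym H2).
  destruct (wo_total W (snd p) (snd q)) as [H3|[H3|H3]]; [tauto| |tauto].
  exfalso; apply Hne. destruct p, q; simpl in *; subst; auto.
Qed.

Lemma prec_lt (W : woType) (p q : W * W) (d : W) : prec q p -> wo_lt (mx p) d -> wo_lt (fst q) d /\ wo_lt (snd q) d.
Proof.
  intros Hp Hd. assert (H : wle (mx q) (mx p)).
  { destruct Hp as [H|[H _]]; simpl in H; unfold wle; auto. }
  destruct (mx_ge W q) as [H1 H2]. split; eapply wle_lt_trans; eauto; eapply wle_lt_trans; eauto.
Qed.

Lemma nomax_gen (W : woType) (P : W -> Prop) :
  (forall x y, P y -> wo_lt x y -> P x) -> infinite {x | P x} ->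
  (forall b, P b -> ~ le_card {x | P x} (seg b)) ->
  forall c, P c -> exists d, P d /\ wo_lt c d.
Proof.
  intros Hdown Hinf Hcard c Pc. apply NNPP; intro Hn.
  assert (Hmax : forall x, P x -> x = c \/ wo_lt x c).
  { intros x Px. destruct (wo_total W x c) as [H|[H|H]]; auto. exfalso; apply Hn; eauto. }
  apply (Hcard c Pc).
  destruct Hinf as [e He].
  destruct (skip _ e (exist _ c Pc) He) as [g [Hg1 Hg2]].
  assert (Hgc : forall n, wo_lt (proj1_sig (g n)) c).
  { intro n. destruct (Hmax _ (proj2_sig (g n))) as [E|E]; auto. exfalso. apply (Hg2 n). apply sig_eq. exact E. }
  assert (Hsi : infinite (seg c)).
  { exists (fun n => exist (fun x => wo_lt x c) _ (Hgc n)). intros i j E. apply Hg1. apply sig_eq.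
    apply (f_equal (@proj1_sig _ _)) in E. exact E. }
  eapply le_trans; [|apply opt_le_inf; exact Hsi].
  exists (fun x : {x | P x} => match excluded_middle_informative (wo_lt (proj1_sig x) c) with
     left h => Some (exist (fun x => wo_lt x c) _ h) | right _ => None end).
  intros [x px] [y py]; simpl.
  destruct (excluded_middle_informative (wo_lt x c)) as [h1|h1], (excluded_middle_informative (wo_lt y c)) as [h2|h2]; intro E.
  - apply (f_equal (fun o => match o with Some z => proj1_sig z | None => x end)) in E. simpl in E.
    apply sig_eq; exact E.
  - discriminate.
  - discriminate.
  - apply sig_eq; simpl. destruct (Hmax x px), (Hmax y py); subst; tauto.
Qed.

Lemma Hgen (W : woType) (P : W -> Prop) :
  (forall x y, P y -> wo_lt x y -> P x) -> infinite {x | P x} ->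
  (forall a, P a -> infinite (seg a) -> le_card (seg a * seg a) (seg a)) ->
  le_card ({x | P x} * {x | P x}) {x | P x}.
Proof.
  intros Hdown Hinf IH.
  destruct (classic (exists b, P b /\ le_card {x | P x} (seg b))) as [[b [Pb Hb]]|HB].
  - assert (Hsb : le_card (seg b) {x | P x}) by (apply sub_le; intros x Hx; eauto).
    assert (Hinfb : infinite (seg b)) by (eapply le_trans; eauto).
    eapply le_trans. apply prod_le; exact Hb. eapply le_trans. apply IH; auto. exact Hsb.
  - assert (HB' : forall b, P b -> ~ le_card {x | P x} (seg b)) by (intros b Pb H; apply HB; eauto).
    pose proof (nomax_gen W P Hdown Hinf HB') as Hnm.
    assert (iW : inhabited W) by (destruct Hinf as [e _]; exact (inhabits (proj1_sig (e 0)))).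
    set (Q := fun q : W * W => P (fst q) /\ P (snd q)).
    assert (Hsmall : forall p, Q p -> ~ le_card {x | P x} {q | prec q p /\ Q q}).
    { intros p Qp H.
      assert (Pm : P (mx p)) by (destruct (mx_in W p) as [E|E]; rewrite E; apply Qp).
      destruct (Hnm _ Pm) as [d [Pd Hd]].
      assert (H2 : le_card {q | prec q p /\ Q q} (seg d * seg d)).
      { exists (fun q => let h := prec_lt W p (proj1_sig q) d (proj1 (proj2_sig q)) Hd in
           (exist (fun x => wo_lt x d) _ (proj1 h), exist (fun x => wo_lt x d) _ (proj2 h))).
        intros [[x1 x2] hx] [[y1 y2] hy]; simpl. intro E. apply sig_eq; simpl.
        pose proof (f_equal (fun z => proj1_sig (fst z)) E) as E1.
        pose proof (f_equal (fun z => proj1_sig (snd z)) E) as E2. simpl in E1, E2. subst; reflexivity. }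
      destruct (fin_dich (seg d)) as [Hi|[n Hn]].
      + apply (HB' d Pd). eapply le_trans; [exact H|]. eapply le_trans; [exact H2|]. apply IH; auto.
      + apply (fin_not_inf (n*n)). eapply le_trans; [exact Hinf|]. eapply le_trans; [exact H|].
        eapply le_trans; [exact H2|]. apply fin_prod; auto. }
    set (g := wrec (wf_prec W) (fun p (f : forall q, prec q p -> W) =>
         epsilon iW (fun x => P x /\ forall q (h : prec q p), Q q -> f q h <> x))).
    assert (Hg : forall p, g p = epsilon iW (fun x => P x /\ forall q, prec q p -> Q q -> g q <> x)).
    { intro p. unfold g at 1. rewrite wrec_eq. reflexivity. }
    assert (Hspec : forall p, Q p -> P (g p) /\ forall q, prec q p -> Q q -> g q <> g p).
    { intros p Qp. rewrite Hg. apply epsilon_spec. apply NNPP. intro Hn. apply (Hsmall p Qp).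
      assert (Hx : forall x : {x | P x}, exists q, prec q p /\ Q q /\ g q = proj1_sig x).
      { intros [x Px]. apply NNPP; intro H. apply Hn. exists x. split; auto. intros q h Qq E. apply H. exists q; auto. }
      exists (fun x => let s := constructive_indefinite_description _ (Hx x) in
          exist (fun q => prec q p /\ Q q) (proj1_sig s) (conj (proj1 (proj2_sig s)) (proj1 (proj2 (proj2_sig s))))).
      intros x y E. apply (f_equal (@proj1_sig _ _)) in E. simpl in E.
      destruct (constructive_indefinite_description _ (Hx x)) as [qx [? [? Ex]]].
      destruct (constructive_indefinite_description _ (Hx y)) as [qy [? [? Ey]]]. simpl in E. subst qy.
      apply sig_eq. rewrite <- Ex, <- Ey. reflexivity. }
    exists (fun pq => exist P (g (proj1_sig (fst pq), proj1_sig (snd pq)))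
        (proj1 (Hspec _ (conj (proj2_sig (fst pq)) (proj2_sig (snd pq)))))).
    intros [[a pa] [b pb]] [[c pc] [d pd]] E. apply (f_equal (@proj1_sig _ _)) in E. simpl in E.
    destruct (classic ((a, b) = (c, d))) as [E2|E2].
    + injection E2; intros; subst. f_equal; apply sig_eq; reflexivity.
    + exfalso. destruct (prec_total W _ _ E2) as [H|H].
      * apply (proj2 (Hspec (c, d) (conj pc pd)) (a, b) H (conj pa pb)). exact E.
      * apply (proj2 (Hspec (a, b) (conj pa pb)) (c, d) H (conj pc pd)). auto.
Qed.

Lemma Hseg (W : woType) : forall a : W, infinite (seg a) -> le_card (seg a * seg a) (seg a).
Proof.
  intro a. induction a as [a IHa] using (well_founded_induction (wo_wf W)).
  intro Hinf. apply (Hgen W (fun x => wo_lt x a)).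
  - intros x y Hy Hxy. eapply wo_trans; eauto.
  - exact Hinf.
  - intros b Hb. apply IHa; exact Hb.
Qed.

Lemma Hall (W : woType) : infinite W -> le_card (W * W) W.
Proof.
  intro Hinf.
  assert (E1 : le_card W {x : W | True}).
  { exists (fun x => exist _ x I); intros x y E; apply (f_equal (@proj1_sig _ _)) in E; exact E. }
  assert (E2 : le_card {x : W | True} W) by apply sub_le_T.
  eapply le_trans. apply (prod_le _ _ _ _ E1 E1). eapply le_trans; [|exact E2].
  apply (Hgen W (fun _ => True)); auto. eapply le_trans; eauto. intros a _. apply Hseg.
Qed.

Lemma bool_lt (W : Type) : infinite W -> lt_card bool W.
Proof. intro HW. apply (fin_lt_inf bool W 2 HW).
  assert (Hb : forall b : bool, (if b then 1 else 0) < 2) by (intros []; auto).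
  exists (fun b => exist (fun i => i < 2) _ (Hb b)). intros [] [] E; auto;
  apply (f_equal (@proj1_sig _ _)) in E; discriminate. Qed.

Lemma sq_lt (W S : woType) : infinite W -> lt_card S W -> lt_card (S * S) W.
Proof. intros HW HS. destruct (fin_dich S) as [Hi|[n Hn]].
  - eapply le_lt_trans; [apply Hall; exact Hi|exact HS].
  - apply (fin_lt_inf _ _ (n*n) HW). apply fin_prod; auto. Qed.

Lemma img_wo (W : woType) (X : Type) : le_card X W -> exists S : woType, le_card X S /\ le_card S X.
Proof. intros [h Hh]. exists (sub_wo W (fun w => exists x, h x = w)). split.
  - exists (fun x => exist (fun w => exists x, h x = w) (h x) (ex_intro _ x eq_refl)). intros x y E. apply Hh.
    apply (f_equal (@proj1_sig _ _)) in E. exact E.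
  - simpl. apply (surj_le (fun x => exist (fun w => exists x, h x = w) (h x) (ex_intro _ x eq_refl))).
    intros [w [x Hx]]. exists x. apply sig_eq. simpl. exact Hx.
Qed.

Lemma prod_lt2 (W : woType) (X Y : Type) : infinite W -> lt_card X W -> lt_card Y W -> lt_card (X * Y) W.
Proof.
  intros HW HX HY.
  destruct (img_wo W X (proj1 HX)) as [SX [HX1 HX2]].
  destruct (img_wo W Y (proj1 HY)) as [SY [HY1 HY2]].
  destruct (compar SX Y) as [H|H].
  - assert (HXY : le_card X SY) by (eapply le_trans; [exact HX1|]; eapply le_trans; [exact H|exact HY1]).
    eapply le_lt_trans. apply (prod_le _ _ _ _ HXY HY1). apply sq_lt; auto. eapply le_lt_trans; [exact HY2|exact HY].
  - assert (HYX : le_card Y SX) by exact H.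
    eapply le_lt_trans. apply (prod_le _ _ _ _ HX1 HYX). apply sq_lt; auto. eapply le_lt_trans; [exact HX2|exact HX].
Qed.

Lemma absorb2 (Z : woType) (A : Type) : infinite A -> le_card A (bool * Z) -> le_card A Z.
Proof.
  intros HA H. destruct (fin_dich Z) as [HZ|[n Hn]].
  - eapply le_trans; [exact H|]. eapply le_trans; [|apply (Hall Z HZ)]. apply prod_le; [|apply le_refl].
    apply (proj1 (bool_lt Z HZ)).
  - exfalso. apply (fin_not_inf (2*n)). eapply le_trans; [exact HA|]. eapply le_trans; [exact H|].
    apply fin_prod; auto.
    assert (Hb : forall b : bool, (if b then 1 else 0) < 2) by (intros []; auto).
    exists (fun b => exist (fun i => i < 2) _ (Hb b)). intros [] [] E; auto;
    apply (f_equal (@proj1_sig _ _)) in E; discriminate.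
Qed.

Lemma compl_large (W : woType) (A : W -> Prop) : infinite W -> lt_card {x | A x} W -> le_card W {x | ~ A x}.
Proof.
  intros HW HA. apply NNPP; intro Hn.
  assert (Hsplit : forall (Z1 : woType), le_card {x | A x} Z1 -> le_card {x | ~ A x} Z1 -> le_card W (bool * Z1)).
  { intros Z1 [f1 H1] [f2 H2].
    exists (fun x => match excluded_middle_informative (A x) with
       left h => (true, f1 (exist _ x h)) | right h => (false, f2 (exist _ x h)) end).
    intros x y. destruct (excluded_middle_informative (A x)), (excluded_middle_informative (A y)); intro E.
    - apply (f_equal snd) in E; simpl in E. apply H1 in E. apply (f_equal (@proj1_sig _ _)) in E. exact E.
    - apply (f_equal fst) in E; discriminate.
    - apply (f_equal fst) in E; discriminate.
    - apply (f_equal snd) in E; simpl in E. apply H2 in E. apply (f_equal (@proj1_sig _ _)) in E. exact E. }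
  destruct (compar (sub_wo W A) {x | ~ A x}) as [H|H].
  - apply Hn. apply (absorb2 (sub_wo W (fun x => ~ A x))); auto. apply Hsplit; [exact H|apply le_refl].
  - apply (proj2 HA). apply (absorb2 (sub_wo W A)); auto. apply Hsplit; [apply le_refl|exact H].
Qed.

Lemma le_union (I D Z : Type) (d : I -> D -> Prop) :
  (forall i, le_card {p | d i p} Z) -> le_card {p | exists i, d i p} (I * Z).
Proof.
  intro H. destruct (classic (inhabited {p | exists i, d i p})) as [[x0]|nU].
  2: { exists (fun u => False_rect _ (nU (inhabits u))). intros u; exfalso; apply nU; exact (inhabits u). }
  assert (iI : inhabited I) by (destruct x0 as [p [i _]]; exact (inhabits i)).
  set (h := fun i => proj1_sig (constructive_indefinite_description _ (H i))).
  assert (Hh : forall i, inj (h i)) by (intro i; unfold h; destruct (constructive_indefinite_description _ (H i)); auto).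
  set (i0 := epsilon iI (fun i => d i (proj1_sig x0))).
  assert (Hi0 : d i0 (proj1_sig x0)) by (apply epsilon_spec; exact (proj2_sig x0)).
  set (z0 := h i0 (exist (fun p => d i0 p) _ Hi0)).
  set (hh := fun i p => match excluded_middle_informative (d i p) with left e => h i (exist (fun p => d i p) p e) | right _ => z0 end).
  set (ix := fun p => epsilon iI (fun i => d i p)).
  exists (fun u => (ix (proj1_sig u), hh (ix (proj1_sig u)) (proj1_sig u))).
  intros [p Hp] [q Hq] E. simpl in E. injection E. intros E2 E1.
  assert (Dp : d (ix p) p) by (apply epsilon_spec; exact Hp).
  assert (Dq : d (ix q) q) by (apply epsilon_spec; exact Hq).
  rewrite E1 in E2, Dp. unfold hh in E2.
  destruct (excluded_middle_informative (d (ix q) p)) as [e1|e1]; [|contradiction].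
  destruct (excluded_middle_informative (d (ix q) q)) as [e2|e2]; [|contradiction].
  apply Hh in E2. apply sig_eq. apply (f_equal (@proj1_sig _ _)) in E2. exact E2.
Qed.

Lemma nomax_card (W : woType) : is_cardinal W -> infinite W -> forall a : W, exists b, wo_lt a b.
Proof.
  intros HC HI a.
  assert (E1 : le_card W {x : W | True}).
  { exists (fun x => exist _ x I); intros x y E; apply (f_equal (@proj1_sig _ _)) in E; exact E. }
  destruct (nomax_gen W (fun _ => True)) with (c := a) as [b [_ Hb]]; eauto.
  - eapply le_trans; eauto.
  - intros b _ H. apply (proj2 (HC b)). eapply le_trans; eauto.
Qed.

Lemma singleton_lt (C D : Type) (a : D) : infinite C -> lt_card {i : D | i = a} C.
Proof. intros [e He]. split.
  - exists (fun _ => e 0). intros [x Hx] [y Hy] _. apply sig_eq; simpl; congruence.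
  - intros [f Hf]. assert (H : f (e 0) = f (e 1)).
    { apply sig_eq; destruct (f (e 0)), (f (e 1)); simpl; congruence. }
    apply Hf, He in H. discriminate.
Qed.

Lemma seg_mono (W : woType) (a b : W) : wle a b -> le_card (seg a) (seg b).
Proof. intro H. apply sub_le. intros x Hx. destruct H; [eapply wo_trans; eauto|subst; auto]. Qed.

Lemma nd_sub {X : Type} (Bs : (X -> Prop) -> Prop) (N N' : X -> Prop) :
  (forall x, N' x -> N x) -> nowhere_dense Bs N -> nowhere_dense Bs N'.
Proof. intros Hs Hn x [B [HB [Bx HBc]]]. apply (Hn x). exists B. repeat split; auto.
  intros y By B' HB' B'y. destruct (HBc y By B' HB' B'y) as [z [? ?]]. eauto. Qed.

Lemma nd_empty {X : Type} (Bs : (X -> Prop) -> Prop) : nowhere_dense Bs (fun _ : X => False).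
Proof. intros x [B [HB [Bx HBc]]]. destruct (HBc x Bx B HB Bx) as [z [_ []]]. Qed.

Lemma meagre_ext {K X : Type} (Bs : (X -> Prop) -> Prop) (S S' : X -> Prop) :
  (forall x, S x <-> S' x) -> meagre_k K Bs S -> meagre_k K Bs S'.
Proof. intros H [F [HF HS]]. exists F. split; auto. intro x. rewrite <- H. apply HS. Qed.

Lemma meagre_union (K X A : Type) (Bs : (X -> Prop) -> Prop) (F : A -> X -> Prop) :
  le_card (K * K) K -> le_card A K -> (forall a, meagre_k K Bs (F a)) -> meagre_k K Bs (fun x => exists a, F a x).
Proof.
  intros [p Hp] [q Hq] HF.
  set (G := fun a => proj1_sig (constructive_indefinite_description _ (HF a))).
  assert (HG : forall a, (forall k, nowhere_dense Bs (G a k)) /\ forall x, F a x <-> exists k, G a k x).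
  { intro a. unfold G. destruct (constructive_indefinite_description _ (HF a)) as [g Hg]. exact Hg. }
  exists (fun k x => exists a k', p (q a, k') = k /\ G a k' x). split.
  - intro k. destruct (classic (exists a k', p (q a, k') = k)) as [[a [k' E]]|Hno].
    + apply (nd_sub Bs (G a k')); [|apply HG]. intros x [a2 [k2 [E2 Gx]]]. rewrite <- E in E2. apply Hp in E2.
      injection E2; intros E3 E4. apply Hq in E4. subst. exact Gx.
    + apply (nd_sub Bs (fun _ => False)); [|apply nd_empty]. intros x [a [k' [E _]]]. apply Hno; eauto.
  - intro x. split.
    + intros [a Fa]. apply (proj2 (HG a)) in Fa. destruct Fa as [k' Gk]. eauto.
    + intros [k [a [k' [_ Gk]]]]. exists a. apply (proj2 (HG a)). eauto.
Qed.

Lemma assemble (K L X : Type) (Bs : (X -> Prop) -> Prop) :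
  (forall A : Type, lt_card A L -> le_card A K) -> le_card (K * K) K ->
  ~ meagre_k K Bs (fun _ => True) ->
  (exists F : L -> X -> Prop, (forall l, meagre_k K Bs (F l)) /\ forall x, exists l, F l x) ->
  add_is (meagre_k K Bs) L /\ cov_is (meagre_k K Bs) L.
Proof.
  intros HA HKK HB [F [HF Hc]]. split; split.
  - intros A G HAL HG. apply meagre_union; auto.
  - exists F. split; auto. intro H. apply HB. revert H. apply meagre_ext. intro x; split; [intros _; exact I|intros _; apply Hc].
  - intros A G HAL HG Hcov. apply HB. apply (meagre_ext Bs (fun x => exists a, G a x)).
    + intro x; split; [intros _; exact I|intros _; apply Hcov].
    + apply meagre_union; auto.
  - exists F. auto.
Qed.

Lemma cover (K L V X : Type) (Bs : (X -> Prop) -> Prop) (Dec : X -> K -> V -> Prop) :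
  inhabited K -> le_card L V -> ~ le_card L K ->
  (forall f j v v', Dec f j v -> Dec f j v' -> v = v') ->
  (forall v, nowhere_dense Bs (fun f => forall j, ~ Dec f j v)) ->
  exists F : L -> X -> Prop, (forall l, meagre_k K Bs (F l)) /\ forall x, exists l, F l x.
Proof.
  intros [k0] [e He] HLK Hu Hnd.
  exists (fun l f => forall j, ~ Dec f j (e l)). split.
  - intro l. exists (fun _ f => forall j, ~ Dec f j (e l)). split; [intro; apply Hnd|].
    intro x. split; [intro H; exists k0; exact H| intros [_ H]; exact H].
  - intro x. apply NNPP; intro Hn. apply HLK.
    assert (H : forall l, exists j, Dec x j (e l)).
    { intro l. apply NNPP; intro H. apply Hn. exists l. intros j Dj. apply H; eauto. }
    exists (fun l => proj1_sig (constructive_indefinite_description _ (H l))).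
    intros l l' E. destruct (constructive_indefinite_description _ (H l)) as [j Hj].
    destruct (constructive_indefinite_description _ (H l')) as [j' Hj']. simpl in E. subst j'.
    apply He. eapply Hu; eauto.
Qed.

Lemma baire (K : woType) (D R : Type) (Bs : ((D -> R) -> Prop) -> Prop) (sm : (D -> Prop) -> Prop) (r0 : R) :
  (forall d d', (forall p, d p <-> d' p) -> sm d -> sm d') ->
  (forall d s, sm d -> exists B, Bs B /\ B s /\ forall f, B f -> cyl d s f) ->
  (forall B, Bs B -> exists d s, sm d /\ forall f, B f <-> cyl d s f) ->
  (forall d1 d2, sm d1 -> sm d2 -> sm (fun p => d1 p \/ d2 p)) ->
  (forall (k : K) (dd : K -> D -> Prop), (forall i, wo_lt i k -> sm (dd i)) -> sm (fun p => exists i, wo_lt i k /\ dd i p)) ->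
  ~ meagre_k K Bs (fun _ => True).
Proof.
  intros Sext S1 S2 S3 S4 [F [HF Hcov]].
  assert (iR : inhabited R) by exact (inhabits r0).
  assert (iC : inhabited ((D -> Prop) * (D -> R))) by exact (inhabits ((fun _ => False), (fun _ => r0))).
  set (ext := fun (k : K) (c : (D -> Prop) * (D -> R)) => epsilon iC (fun c' =>
      sm (fst c') /\ (forall p, fst c p -> fst c' p /\ snd c' p = snd c p) /\
      forall f, cyl (fst c') (snd c') f -> ~ F k f)).
  set (stage := wrec (wo_wf K) (fun k (st : forall i, wo_lt i k -> (D -> Prop) * (D -> R)) =>
      ext k ((fun p => exists i (h : wo_lt i k), fst (st i h) p),
             (fun p => epsilon iR (fun r => exists i (h : wo_lt i k), fst (st i h) p /\ snd (st i h) p = r))))).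
  set (U := fun k : K => ((fun p => exists i (h : wo_lt i k), fst (stage i) p),
             (fun p => epsilon iR (fun r => exists i (h : wo_lt i k), fst (stage i) p /\ snd (stage i) p = r)))).
  assert (Hst : forall k, stage k = ext k (U k)).
  { intro k. unfold stage at 1. rewrite wrec_eq. reflexivity. }
  assert (Inv : forall k, sm (fst (stage k)) /\
     (forall i, wo_lt i k -> forall p, fst (stage i) p -> fst (stage k) p /\ snd (stage k) p = snd (stage i) p) /\
     (forall f, cyl (fst (stage k)) (snd (stage k)) f -> ~ F k f)).
  { intro k. induction k as [k IH] using (well_founded_induction (wo_wf K)).
    assert (Coh : forall i, wo_lt i k -> forall p, fst (stage i) p -> snd (U k) p = snd (stage i) p).
    { intros i hi p Hp. simpl.
      assert (Hex : exists r, exists i (h : wo_lt i k), fst (stage i) p /\ snd (stage i) p = r) by eauto 6.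
      destruct (epsilon_spec iR _ Hex) as [i' [hi' [Hp' E']]]. rewrite <- E'.
      destruct (wo_total K i i') as [Hl|[He|Hl]].
      - apply (proj2 (proj1 (proj2 (IH i' hi')) i Hl p Hp)).
      - subst; reflexivity.
      - symmetry. apply (proj2 (proj1 (proj2 (IH i hi)) i' Hl p Hp')). }
    assert (SmU : sm (fst (U k))).
    { apply (Sext (fun p => exists i, wo_lt i k /\ fst (stage i) p)).
      - intro p; simpl. split; [intros [i [h H]]; eauto|intros [i [h H]]; eauto].
      - apply S4. intros i hi. apply (IH i hi). }
    assert (Hext : exists c', sm (fst c') /\ (forall p, fst (U k) p -> fst c' p /\ snd c' p = snd (U k) p) /\
      forall f, cyl (fst c') (snd c') f -> ~ F k f).
    { destruct (S1 _ (snd (U k)) SmU) as [B [HB [Bs0 HBc]]].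
      assert (Hnot : ~ (forall y, B y -> closure Bs (F k) y)).
      { intro H. apply (HF k (snd (U k))). exists B. repeat split; auto. }
      apply not_all_ex_not in Hnot. destruct Hnot as [y Hy].
      apply imply_to_and in Hy. destruct Hy as [By Hcl].
      unfold closure in Hcl. apply not_all_ex_not in Hcl. destruct Hcl as [B' Hcl].
      apply imply_to_and in Hcl. destruct Hcl as [HB' Hcl]. apply imply_to_and in Hcl. destruct Hcl as [B'y Hcl].
      destruct (S2 B' HB') as [d'' [s'' [Sm'' HB'e]]].
      exists ((fun p => fst (U k) p \/ d'' p), y). simpl. split; [|split].
      - apply S3; auto.
      - intros p Hp. split; [left; exact Hp|]. apply (HBc y By p Hp).
      - intros f Hf Ff. apply Hcl. exists f. split; auto. apply HB'e. intros i Hi.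
        rewrite (Hf i (or_intror Hi)). apply (proj1 (HB'e y) B'y i Hi). }
    assert (Hs : sm (fst (stage k)) /\ (forall p, fst (U k) p -> fst (stage k) p /\ snd (stage k) p = snd (U k) p) /\
      forall f, cyl (fst (stage k)) (snd (stage k)) f -> ~ F k f).
    { rewrite Hst. unfold ext. apply (epsilon_spec iC _ Hext). }
    destruct Hs as [Hs1 [Hs2 Hs3]]. split; [exact Hs1|split; [|exact Hs3]].
    intros i hi p Hp. destruct (Hs2 p) as [H1 H2].
    - simpl. exists i, hi. exact Hp.
    - split; auto. rewrite H2. apply Coh; auto. }
  set (fs := fun p => epsilon iR (fun r => exists k, fst (stage k) p /\ snd (stage k) p = r)).
  destruct (proj1 (Hcov fs) I) as [k Fk].
  apply (proj2 (proj2 (Inv k)) fs); auto.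
  intros p Hp. unfold fs.
  assert (Hex : exists r k, fst (stage k) p /\ snd (stage k) p = r) by eauto.
  destruct (epsilon_spec iR _ Hex) as [k' [Hp' E']]. rewrite <- E'.
  destruct (wo_total K k k') as [Hl|[He|Hl]].
  - apply (proj2 (proj1 (proj2 (Inv k')) k Hl p Hp)).
  - subst; reflexivity.
  - symmetry. apply (proj2 (proj1 (proj2 (Inv k)) k' Hl p Hp')).
Qed.

Lemma succ_le (K : woType) (L : Type) : is_succ_card K L -> forall A, lt_card A L -> le_card A K.
Proof. intros [HKL Hmin] A HA. destruct (compar K A) as [H|H]; auto.
  apply NNPP; intro Hn. apply (proj2 HA). apply Hmin. split; auto. Qed.

Lemma cof_seq (M K : woType) : cf_is M K -> exists c : K -> M, forall m : M, exists j, ~ wo_lt (c j) m.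
Proof.
  intros [[C [HC [f [Hfi Hfs]]]] _].
  exists (fun j => proj1_sig (proj1_sig (constructive_indefinite_description _ (Hfs j)))).
  intro m. destruct (HC m) as [y [Cy Hmy]]. exists (f (exist _ y Cy)).
  destruct (constructive_indefinite_description _ (Hfs (f (exist _ y Cy)))) as [x Hx]. simpl.
  apply Hfi in Hx. subst x. simpl. intro H. destruct Hmy as [E|E].
  - subst. apply (wo_irrefl M _ H).
  - apply (wo_irrefl M m). eapply wo_trans; eauto.
Qed.

Lemma cf_bnd (M K : woType) : cf_is M K -> forall S : M -> Prop, lt_card {x | S x} K -> exists b, forall x, S x -> wo_lt x b.
Proof. intros [_ Hc] S HS. destruct (classic (cofinal S)) as [Hco|Hnc].
  - exfalso. apply (proj2 HS). apply Hc. exact Hco.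
  - unfold cofinal in Hnc. apply not_all_ex_not in Hnc. destruct Hnc as [b Hb]. exists b. intros x Sx.
    destruct (wo_total M x b) as [H|[H|H]]; auto; exfalso; apply Hb; exists x; split; auto.
Qed.

Lemma fit_bnd (W : woType) : (forall S : W -> Prop, lt_card {x | S x} W -> exists b, forall x, S x -> wo_lt x b) ->
  forall X, lt_card X W -> exists g : W, le_card X (seg g).
Proof. intros Hb X [[h Hh] HX2]. destruct (Hb (fun w => exists x, h x = w)) as [b Hb'].
  - split. apply sub_le_T. intro H. apply HX2. eapply le_trans; [exact H|].
    apply (surj_le (fun x => exist (fun w => exists x, h x = w) (h x) (ex_intro _ x eq_refl))).
    intros [w [x Hx]]; exists x; apply sig_eq; exact Hx.
  - exists b. exists (fun x => exist (fun w => wo_lt w b) (h x) (Hb' _ (ex_intro _ x eq_refl))).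
    intros x y E. apply Hh. apply (f_equal (@proj1_sig _ _)) in E; exact E.
Qed.

Lemma wmax (W : woType) (a b : W) : exists m, wle a m /\ wle b m.
Proof. destruct (wo_total W a b) as [H|[H|H]]; [exists b|exists b|exists a]; unfold wle; subst; auto. Qed.

Lemma strict_fit (M K : woType) (c : K -> M) : is_cardinal M -> infinite K -> lt_card K M ->
  (forall m, exists j, wo_lt m (c j)) ->
  forall X : Type, lt_card X M -> exists g : M, lt_card X (seg g).
Proof.
  intros HMc HKi HKM Hc X HX.
  assert (HMi : infinite M) by (eapply le_trans; [exact HKi|exact (proj1 HKM)]).
  assert (Hex : exists g : M, ~ le_card (seg g) X).
  { apply NNPP; intro Hn.
    assert (Hall' : forall g : M, le_card (seg g) X) by (intro g; apply NNPP; intro H; apply Hn; eauto).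
    apply (proj2 (prod_lt2 M K X HMi HKM HX)).
    set (h := fun g => proj1_sig (constructive_indefinite_description _ (Hall' g))).
    assert (Hh : forall g, inj (h g)) by (intro g; unfold h; destruct (constructive_indefinite_description _ (Hall' g)); auto).
    destruct HMi as [e He].
    destruct (Hc (e 0)) as [j0 Hj0].
    set (x0 := h (c j0) (exist (fun x => wo_lt x (c j0)) _ Hj0)).
    set (io := fun m => proj1_sig (constructive_indefinite_description _ (Hc m))).
    set (hh := fun j m => match excluded_middle_informative (wo_lt m (c j)) with
        left p => h (c j) (exist (fun x => wo_lt x (c j)) m p) | right _ => x0 end).
    exists (fun m => (io m, hh (io m) m)).
    intros m1 m2 E. injection E. intros E2 E1.
    assert (H1 : wo_lt m1 (c (io m1))) by (unfold io; exact (proj2_sig (constructive_indefinite_description _ (Hc m1)))).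
    assert (H2 : wo_lt m2 (c (io m2))) by (unfold io; exact (proj2_sig (constructive_indefinite_description _ (Hc m2)))).
    rewrite E1 in E2, H1. unfold hh in E2.
    destruct (excluded_middle_informative (wo_lt m1 (c (io m2)))) as [p1|p1]; [|contradiction].
    destruct (excluded_middle_informative (wo_lt m2 (c (io m2)))) as [p2|p2]; [|contradiction].
    apply Hh in E2. apply (f_equal (@proj1_sig _ _)) in E2. exact E2. }
  destruct Hex as [g Hg]. exists g. destruct (compar (segw M g) X) as [H|H].
  - contradiction.
  - split; auto.
Qed.

Lemma choose_j (M K : woType) (c : K -> M) : is_cardinal M -> infinite K -> lt_card K M ->
  (forall m, exists j, ~ wo_lt (c j) m) -> forall (v : M) (X : Type), lt_card X M ->
  exists j, wo_lt v (c j) /\ infinite (seg (c j)) /\ lt_card X (seg (c j)).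
Proof.
  intros HMc HKi HKM Hc0 v X HX.
  assert (HMi : infinite M) by (eapply le_trans; [exact HKi|exact (proj1 HKM)]).
  assert (Hc : forall m, exists j, wo_lt m (c j)).
  { intro m. destruct (nomax_card M HMc HMi m) as [m' Hm']. destruct (Hc0 m') as [j Hj]. exists j.
    destruct (wo_total M (c j) m') as [H|[H|H]]; [contradiction|subst; auto|eapply wo_trans; eauto]. }
  destruct (strict_fit M K c HMc HKi HKM Hc X HX) as [g1 Hg1].
  destruct (strict_fit M K c HMc HKi HKM Hc K HKM) as [g2 Hg2].
  destruct (wmax M g1 g2) as [a [Ha1 Ha2]]. destruct (wmax M a v) as [b [Hb1 Hb2]].
  destruct (nomax_card M HMc HMi b) as [b' Hb']. destruct (Hc b') as [j Hj].
  assert (Hbj : wo_lt b (c j)) by (eapply wo_trans; eauto).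
  exists j. split; [|split].
  - eapply wle_lt_trans; eauto.
  - eapply le_trans; [exact HKi|]. eapply le_trans; [exact (proj1 Hg2)|]. apply seg_mono. left.
    eapply wle_lt_trans; [exact Ha2|]. eapply wle_lt_trans; eauto.
  - eapply lt_le_trans; [exact Hg1|]. apply seg_mono. left.
    eapply wle_lt_trans; [exact Ha1|]. eapply wle_lt_trans; eauto.
Qed.

Lemma union_gen (W : woType) (K0 : Type) (I D : Type) (d : I -> D -> Prop) :
  infinite W -> is_cardinal W -> le_card K0 W ->
  (forall S : W -> Prop, lt_card {x | S x} K0 -> exists b, forall x, S x -> wo_lt x b) ->
  (forall i, exists g : W, le_card {p | d i p} (seg g)) ->
  lt_card I K0 -> lt_card {p | exists i, d i p} W.
Proof.
  intros HWi HWc HK0 Hbnd Hfit HI.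
  set (gi := fun i => proj1_sig (constructive_indefinite_description _ (Hfit i))).
  assert (Hgi : forall i, le_card {p | d i p} (seg (gi i))).
  { intro i; unfold gi; destruct (constructive_indefinite_description _ (Hfit i)); auto. }
  destruct (Hbnd (fun x => exists i, gi i = x)) as [b Hb].
  { eapply le_lt_trans; [|exact HI].
    apply (surj_le (fun i => exist (fun x => exists i, gi i = x) (gi i) (ex_intro _ i eq_refl))).
    intros [x [i E]]. exists i. apply sig_eq. exact E. }
  eapply le_lt_trans. apply (le_union I D (seg b) d).
  - intro i. eapply le_trans; [apply Hgi|]. apply seg_mono. left. apply Hb. eauto.
  - apply prod_lt2; [exact HWi| eapply lt_le_trans; eauto | exact (HWc b)].
Qed.

Lemma bnd_union (W K : woType) (k : K) : is_cardinal K ->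
  (forall S : W -> Prop, lt_card {x|S x} K -> exists b, forall x, S x -> wo_lt x b) ->
  forall dd : K -> W -> Prop, (forall i, wo_lt i k -> exists b, forall x, dd i x -> wo_lt x b) ->
  exists b, forall x, (exists i, wo_lt i k /\ dd i x) -> wo_lt x b.
Proof.
  intros HKc Hb dd Hdd.
  assert (iW : inhabited W).
  { destruct (Hb (fun _ => False)) as [b _]; [|exact (inhabits b)].
    split. exists (fun x => False_rect K (proj2_sig x)). intros [x []].
    intros [f _]. exact (proj2_sig (f k)). }
  set (bb := fun i => epsilon iW (fun b => forall x, dd i x -> wo_lt x b)).
  destruct (Hb (fun b => exists i, wo_lt i k /\ bb i = b)) as [b Hbb].
  - eapply le_lt_trans; [|exact (HKc k)].
    apply (surj_le (fun i : seg k => exist (fun b => exists i, wo_lt i k /\ bb i = b) (bb (proj1_sig i))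
       (ex_intro _ (proj1_sig i) (conj (proj2_sig i) eq_refl)))).
    intros [b' [i [hi E]]]. exists (exist _ i hi). apply sig_eq. simpl. exact E.
  - exists b. intros x [i [hi Hx]]. eapply wo_trans; [|apply Hbb; exists i; split; [exact hi|reflexivity]].
    apply (epsilon_spec iW (fun b => forall x, dd i x -> wo_lt x b) (Hdd i hi)). exact Hx.
Qed.

Lemma nd_box (C D R J : Type) (pi : J -> D) (v : R) : infinite C ->
  (forall d : D -> Prop, lt_card {i | d i} C -> exists j, ~ d (pi j)) ->
  nowhere_dense (box_base C D R) (fun f => forall j, f (pi j) <> v).
Proof.
  intros HC Hesc x [B [HB [Bx HBc]]].
  destruct HB as [dom [s [Hdom HBe]]].
  destruct (Hesc dom Hdom) as [j Hj].
  set (y := fun i => if excluded_middle_informative (i = pi j) then v else x i).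
  assert (By : B y).
  { apply HBe. intros i Hi. unfold y. destruct (excluded_middle_informative (i = pi j)) as [E|E].
    - subst. contradiction.
    - apply (proj1 (HBe x) Bx i Hi). }
  destruct (HBc y By (cyl (fun i => i = pi j) y)) as [z [Bz Nz]].
  - exists (fun i => i = pi j), y. split; [apply singleton_lt; exact HC| intro; reflexivity].
  - intros i _; reflexivity.
  - apply (Nz j). rewrite (Bz (pi j) eq_refl). unfold y.
    destruct (excluded_middle_informative (pi j = pi j)); [reflexivity| contradiction].
Qed.

Lemma nd_bd (M K : woType) (R : Type) (c : K -> M) (v : R) : (forall a : M, exists b, wo_lt a b) ->
  (forall m : M, exists j, ~ wo_lt (c j) m) ->
  nowhere_dense (bd_base M R) (fun f => forall j, f (c j) <> v).
Proof.
  intros Hnm Hesc x [B [HB [Bx HBc]]].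
  destruct HB as [al [s HBe]].
  destruct (Hesc al) as [j Hj].
  set (y := fun i => if excluded_middle_informative (i = c j) then v else x i).
  assert (By : B y).
  { apply HBe. intros i Hi. unfold y. destruct (excluded_middle_informative (i = c j)) as [E|E].
    - subst. contradiction.
    - apply (proj1 (HBe x) Bx i Hi). }
  destruct (Hnm (c j)) as [be Hbe].
  destruct (HBc y By (cyl (fun i => wo_lt i be) y)) as [z [Bz Nz]].
  - exists be, y. intro; reflexivity.
  - intros i _; reflexivity.
  - apply (Nz j). rewrite (Bz (c j) Hbe). unfold y.
    destruct (excluded_middle_informative (c j = c j)); [reflexivity| contradiction].
Qed.

Definition pc {M : woType} (g : M) : seg g * seg g -> seg g :=
  epsilon (inhabits (fun p : seg g * seg g => fst p)) (fun h => inj h).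

Definition large {M : woType} {R : Type} (P : R -> Prop) (f : M -> R) (g : M) (u : seg g) : Prop :=
  le_card (seg g) {b : seg g | P (f (proj1_sig (pc g (u, b))))}.

Definition DecL {M K : woType} {R : Type} (P : R -> Prop) (c : K -> M) (f : M -> R) (j : K) (v : M) : Prop :=
  exists h : wo_lt v (c j), large P f (c j) (exist (fun x => wo_lt x (c j)) v h) /\
    forall u : seg (c j), u <> exist (fun x => wo_lt x (c j)) v h -> ~ large P f (c j) u.

Lemma DecL_uniq {M K : woType} {R : Type} (P : R -> Prop) (c : K -> M) f j v v' :
  DecL P c f j v -> DecL P c f j v' -> v = v'.
Proof.
  intros [h [Hl Hu]] [h' [Hl' Hu']]. apply NNPP; intro Hne.
  apply (Hu (exist (fun x => wo_lt x (c j)) v' h')). 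
  - intro E. apply Hne. apply (f_equal (@proj1_sig _ _)) in E. simpl in E. symmetry; exact E.
  - exact Hl'.
Qed.

Lemma nd_L (M K : woType) (R : Type) (P : R -> Prop) (r1 r0 : R) (c : K -> M) (v : M) :
  P r1 -> ~ P r0 -> is_cardinal M ->
  (forall d : M -> Prop, lt_card {i | d i} M -> exists j, wo_lt v (c j) /\ infinite (seg (c j)) /\ lt_card {i | d i} (seg (c j))) ->
  nowhere_dense (box_base M M R) (fun f => forall j, ~ DecL P c f j v).
Proof.
  intros P1 P0 HMc Hch x [B [HB [Bx HBc]]].
  destruct HB as [dom [s [Hdom HBe]]].
  destruct (Hch dom Hdom) as [j [hv [Hinf Hlt]]].
  assert (Hpi : inj (pc (c j))).
  { unfold pc. apply epsilon_spec. apply (Hseg M (c j) Hinf). }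
  set (v0 := exist (fun x => wo_lt x (c j)) v hv).
  set (y := fun i => if excluded_middle_informative (dom i) then x i
        else if excluded_middle_informative (exists b, proj1_sig (pc (c j) (v0, b)) = i) then r1 else r0).
  assert (By : B y).
  { apply HBe. intros i Hi. unfold y. destruct (excluded_middle_informative (dom i)); [apply (proj1 (HBe x) Bx i Hi)|contradiction]. }
  destruct (HBc y By (cyl (fun i => wo_lt i (c j)) y)) as [z [Bz Nz]].
  - exists (fun i => wo_lt i (c j)), y. split; [apply HMc| intro; reflexivity].
  - intros i _; reflexivity.
  - apply (Nz j). exists hv.
    assert (Hzy : forall b : seg (c j), z (proj1_sig b) = y (proj1_sig b)) by (intro b; apply Bz; exact (proj2_sig b)).
    assert (Hsmall : forall u : seg (c j), lt_card {b : seg (c j) | dom (proj1_sig (pc (c j) (u, b)))} (seg (c j))).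
    { intro u. eapply le_lt_trans; [|exact Hlt].
      exists (fun b => exist dom (proj1_sig (pc (c j) (u, proj1_sig b))) (proj2_sig b)).
      intros b1 b2 E. apply (f_equal (@proj1_sig _ _)) in E. simpl in E. apply sig_eq in E. apply Hpi in E.
      injection E as E. apply sig_eq; auto. }
    split.
    + unfold large. fold v0.
      eapply le_trans. apply (compl_large (segw M (c j)) (fun b => dom (proj1_sig (pc (c j) (v0, b))))).
      * exact Hinf.
      * exact (Hsmall v0).
      * apply sub_le. intros b Hb. rewrite Hzy. unfold y. destruct (excluded_middle_informative _) as [H|H]; [contradiction|].
        destruct (excluded_middle_informative _) as [H2|H2]; [exact P1|exfalso; apply H2; exists b; reflexivity].
    + fold v0. intros u Hu Hl. apply (proj2 (Hsmall u)). eapply le_trans; [exact Hl|]. apply sub_le. intros b Hb.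
      apply NNPP; intro Hd. rewrite Hzy in Hb. unfold y in Hb.
      destruct (excluded_middle_informative _) as [H|H]; [contradiction|].
      destruct (excluded_middle_informative _) as [[b' E]|H2]; [|contradiction].
      apply sig_eq in E. apply Hpi in E. injection E as E1 E2. apply Hu. symmetry; exact E1.
Qed.

Lemma baire_box (K W : woType) (D R : Type) (r0 : R) :
  infinite W -> is_cardinal W -> le_card K W -> is_cardinal K -> infinite K ->
  (forall S : W -> Prop, lt_card {x | S x} K -> exists b, forall x, S x -> wo_lt x b) ->
  (forall X : Type, lt_card X W -> exists g : W, le_card X (seg g)) ->
  ~ meagre_k K (box_base W D R) (fun _ => True).
Proof.
  intros HWi HWc HKW HKc HKi Hbnd Hfit.
  assert (Sext : forall d d' : D -> Prop, (forall p, d p <-> d' p) -> lt_card {p | d p} W -> lt_card {p | d' p} W).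
  { intros d d' H Hd. eapply le_lt_trans; [|exact Hd]. apply sub_le. intros p; apply H. }
  apply (baire K D R (box_base W D R) (fun d => lt_card {p | d p} W) r0 Sext).
  - intros d s Hd. exists (cyl d s). split; [|split].
    + exists d, s. split; [exact Hd|intro; reflexivity].
    + intros i _; reflexivity.
    + auto.
  - intros B [dom [s [H1 H2]]]. exists dom, s. auto.
  - intros d1 d2 H1 H2. apply (Sext (fun p => exists b : bool, (if b then d1 else d2) p)).
    + intro p. split; [intros [[] H]; auto|intros [H|H]; [exists true|exists false]; auto].
    + apply (union_gen W K bool D (fun b => if b then d1 else d2)); auto.
      * intros []; apply Hfit; auto.
      * apply bool_lt; auto.
  - intros k dd Hdd. apply (Sext (fun p => exists i : seg k, dd (proj1_sig i) p)).
    + intro p. split; [intros [[i hi] H]; eauto|intros [i [hi H]]; exists (exist _ i hi); auto].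
    + apply (union_gen W K (seg k) D (fun i => dd (proj1_sig i))); auto.
      * intros [i hi]; apply Hfit; apply Hdd; auto.
      * apply HKc.
Qed.

Lemma baire_bd (K M : woType) (R : Type) (r0 : R) : is_cardinal K ->
  (forall S : M -> Prop, lt_card {x | S x} K -> exists b, forall x, S x -> wo_lt x b) ->
  ~ meagre_k K (bd_base M R) (fun _ => True).
Proof.
  intros HKc Hbnd.
  apply (baire K M R (bd_base M R) (fun d => exists b, forall x, d x -> wo_lt x b) r0).
  - intros d d' H [b Hb]. exists b. intros x Hx. apply Hb, H, Hx.
  - intros d s [b Hb]. exists (cyl (fun i => wo_lt i b) s). split; [|split].
    + exists b, s. intro; reflexivity.
    + intros i _; reflexivity.
    + intros f Hf i Hi. apply Hf, Hb, Hi.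
  - intros B [al [s H]]. exists (fun i => wo_lt i al), s. split; auto. exists al; auto.
  - intros d1 d2 [b1 H1] [b2 H2]. destruct (wmax M b1 b2) as [m [Hm1 Hm2]]. exists m.
    intros x [Hx|Hx].
    + destruct Hm1 as [Hm1|Hm1]; [eapply wo_trans; [apply H1, Hx|exact Hm1]|subst; apply H1, Hx].
    + destruct Hm2 as [Hm2|Hm2]; [eapply wo_trans; [apply H2, Hx|exact Hm2]|subst; apply H2, Hx].
  - intros k dd Hdd. apply (bnd_union M K k HKc Hbnd dd Hdd).
Qed.

Theorem mainTheorem8 (K M : woType) (L : Type) :
  infinite K -> regular K ->
  is_cardinal M -> cf_is M K -> lt_card K M ->
  is_succ_card K L ->
  let I1 := meagre_k K (box_base K K M) in
  let I2 := meagre_k K (bd_base M M) in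
  let I3 := meagre_k K (box_base K M M) in
  let I4 := meagre_k K (box_base M M bool) in
  let I5 := meagre_k K (box_base M M M) in
  add_is I1 L /\ add_is I2 L /\ add_is I3 L /\ add_is I4 L /\ add_is I5 L /\
  cov_is I1 L /\ cov_is I2 L /\ cov_is I3 L /\ cov_is I4 L /\ cov_is I5 L.
Proof.
  intros HKi Hreg HMc Hcf HKM Hsucc I1 I2 I3 I4 I5.
  destruct Hreg as [HKc HKreg].
  assert (HMi : infinite M) by (eapply le_trans; [exact HKi|exact (proj1 HKM)]).
  assert (iK : inhabited K) by (destruct HKi as [e _]; exact (inhabits (e 0))).
  destruct HMi as [eM HeM]. set (m0 := eM 0). set (m1 := eM 1).
  assert (Hm01 : m1 <> m0) by (intro E; apply HeM in E; discriminate).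
  assert (HMi' : infinite M) by (exists eM; exact HeM).

  pose proof (succ_le K L Hsucc) as Hsl.
  pose proof (Hall K HKi) as HKK.
  assert (HLM : le_card L M) by (apply (proj2 Hsucc); exact HKM).
  assert (HLK : ~ le_card L K) by exact (proj2 (proj1 Hsucc)).
  destruct (cof_seq M K Hcf) as [c Hc].
  pose proof (cf_bnd M K Hcf) as Hbnd.
  pose proof (nomax_card M HMc HMi') as Hnm.
  assert (HfitM : forall X : Type, lt_card X M -> exists g : M, le_card X (seg g)).
  { intros X HX. destruct (choose_j M K c HMc HKi HKM Hc m0 X HX) as [j [_ [_ H]]]. exists (c j). exact (proj1 H). }
  pose proof (fit_bnd K HKreg) as HfitK.
  destruct (proj1 HKM) as [io Hio].
  assert (A1 : add_is I1 L /\ cov_is I1 L).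
  { apply assemble; auto.
    - apply (baire_box K K K M m0); auto. apply le_refl.
    - apply (cover K L M (K -> M) _ (fun f j v => f j = v)); auto.
      + intros f j v v' E1 E2; congruence.
      + intro v. apply (nd_box K K M K (fun j => j) v HKi).
        intros d Hd. apply NNPP; intro Hn. apply (proj2 Hd).
        exists (fun j => exist d j (NNPP _ (fun H => Hn (ex_intro _ j H)))). intros x y E.
        apply (f_equal (@proj1_sig _ _)) in E. exact E. }
  assert (A2 : add_is I2 L /\ cov_is I2 L).
  { apply assemble; auto.
    - apply (baire_bd K M M m0); auto.
    - apply (cover K L M (M -> M) _ (fun f j v => f (c j) = v)); auto.
      + intros f j v v' E1 E2; congruence.
      + intro v. apply (nd_bd M K M c v Hnm Hc). }
  assert (A3 : add_is I3 L /\ cov_is I3 L).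
  { apply assemble; auto.
    - apply (baire_box K K M M m0); auto. apply le_refl.
    - apply (cover K L M (M -> M) _ (fun f j v => f (io j) = v)); auto.
      + intros f j v v' E1 E2; congruence.
      + intro v. apply (nd_box K M M K io v HKi).
        intros d Hd. apply NNPP; intro Hn. apply (proj2 Hd).
        exists (fun j => exist d (io j) (NNPP _ (fun H => Hn (ex_intro _ j H)))). intros x y E.
        apply (f_equal (@proj1_sig _ _)) in E. apply Hio. exact E. }
  assert (A4 : add_is I4 L /\ cov_is I4 L).
  { apply assemble; auto.
    - apply (baire_box K M M bool true); auto. exact (proj1 HKM).
    - apply (cover K L M (M -> bool) _ (DecL (fun b => b = true) c)); auto.
      + intros f j v v'; apply DecL_uniq.
      + intro v. apply (nd_L M K bool (fun b => b = true) true false c v);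
        [reflexivity | intro H; discriminate H | exact HMc | intros d Hd; apply (choose_j M K c HMc HKi HKM Hc v _ Hd)]. }
  assert (A5 : add_is I5 L /\ cov_is I5 L).
  { apply assemble; auto.
    - apply (baire_box K M M M m0); auto. exact (proj1 HKM).
    - apply (cover K L M (M -> M) _ (DecL (fun r => r = m0) c)); auto.
      + intros f j v v'; apply DecL_uniq.
      + intro v. apply (nd_L M K M (fun r => r = m0) m0 m1 c v);
        [reflexivity | exact Hm01 | exact HMc | intros d Hd; apply (choose_j M K c HMc HKi HKM Hc v _ Hd)]. }
  tauto.
Qed.
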